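(* Let $p\ge 1$, let $\mathcal{T}$ be any set of $n$ tasks with latent wait times $t_1,\dots,t_n\ge 0$, and let $\pi$ be any tour of $\mathcal{T}$ starting at the vehicle start point $x_s$. Then \[ l(\pi)\le \Big(Q\,(p+1)\,c^p(\pi)^p\Big)^{\frac{1}{p+1}}. \]
   Context: A single vehicle moves at unit speed (so distances equal travel times). All tasks, and the vehicle start point $x_s$, lie in a connected planar region $\mathcal{E}\subset\mathbb{R}^2$; $Q'$ denotes the maximum Euclidean distance between any two of these points, $\bar s>0$ is the expected service time of a task, and $Q=Q'+\bar s$. A task $\tau_i$ has a location $x_i\in\mathcal{E}$ and a latent wait time $t_i\ge 0$ (time it has already waited when the tour is planned). A tour $\pi=(x_s,\tau_1,\dots,\tau_n)$ is an ordering in which every task of $\mathcal{T}$ is visited exactly once, starting from $x_s$; writing $x_0=x_s$ and indexing tasks in tour order, let $l_j=\|x_j-x_{j-1}\|$ for $j=1,\dots,n$ and $l(\pi)=\sum_{j=1}^n l_j$ (the length of $\pi$). For $p\ge1$ the cost of $\pi$ is \[ c^p(\pi)=\Big(\sum_{i=1}^n\Big(t_i+\sum_{j=1}^i l_j\Big)^p\Big)^{1/p}. \] *)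

(* Defs.v *)
From HB Require Import structures.
From mathcomp Require Import all_boot all_order all_algebra all_fingroup.
From mathcomp Require Import all_classical all_reals all_analysis.
Set Implicit Arguments. Unset Strict Implicit. Unset Printing Implicit Defensive.
Import Order.TTheory GRing.Theory Num.Theory numFieldNormedType.Exports.
Local Open Scope ring_scope.

Section Tour.
Variable R : realType.

Definition edist (a b : R * R) : R :=
  Num.sqrt ((a.1 - b.1) ^+ 2 + (a.2 - b.2) ^+ 2).

Variables (n : nat) (xs : R * R) (locs : 'I_n -> R * R) (wt : 'I_n -> R).
(* a tour: the k-th visited task (k = 0..n-1) is sigma k *)
Variable sigma : {perm 'I_n}.

(* x_0 = x_s, x_j = location of j-th visited task (j = 1..n) *)
Definition tour_pts : seq (R * R) := xs :: [seq locs (sigma k) | k <- enum 'I_n].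

Definition leg (j : nat) : R := edist (nth xs tour_pts j.-1) (nth xs tour_pts j).

Definition tour_len : R := \sum_(1 <= j < n.+1) leg j.

Definition arrival (i : nat) : R :=
  nth 0 [seq wt (sigma k) | k <- enum 'I_n] i.-1 + \sum_(1 <= j < i.+1) leg j.

Definition tour_cost (p : R) : R :=
  powR (\sum_(1 <= i < n.+1) powR (arrival i) p) p^-1.

Definition point (a : option 'I_n) : R * R :=
  if a is Some i then locs i else xs.
Definition Qprime : R :=
  \big[Num.max/0]_(a : option 'I_n) \big[Num.max/0]_(b : option 'I_n) edist (point a) (point b).

End Tour.

(* Main.v *)
Require Import Defs.
From HB Require Import structures.
From mathcomp Require Import all_boot all_order all_algebra all_fingroup.
From mathcomp Require Import all_classical all_reals all_analysis.
From mathcomp Require Import ring lra.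
Import Order.TTheory GRing.Theory Num.Theory numFieldNormedType.Exports.
Local Open Scope ring_scope.

Lemma young_step (R : realType) (p a b : R) : 1 <= p -> 0 <= a -> 0 <= b ->
  b `^ (p + 1) - a `^ (p + 1) <= (p + 1) * b `^ p * (b - a).
Proof.
move=> p1 a0 b0.
have p0 : 0 < p by apply: lt_le_trans p1.
have q0 : 0 < p + 1 by apply: addr_gt0.
have q'0 : 0 < (p + 1) / p by apply: divr_gt0.
have Y := @conjugate_powR R a (b `^ p) (p + 1) ((p + 1) / p) a0 (powR_ge0 _ _) q0 q'0.
have : (p + 1)^-1 + ((p + 1) / p)^-1 = 1.
  by field; rewrite !gt_eqF.
move=> /Y {}Y.
have e : p * ((p + 1) / p) = p + 1 by field; rewrite gt_eqF.
rewrite -powRrM e in Y.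
have bq : b `^ (p + 1) = b * b `^ p.
  by rewrite -(mulr_powRB1 b0 q0) addrK.
rewrite bq.
have : (p + 1) * (a * b `^ p) <= a `^ (p + 1) + p * (b * b `^ p).
  rewrite -bq.
  have := ler_wpM2l (ltW q0) Y.
  have -> : (p + 1) * (a `^ (p + 1) / (p + 1) + b `^ (p + 1) / ((p + 1) / p))
     = a `^ (p + 1) + p * b `^ (p + 1) by field; rewrite !gt_eqF.
  done.
nra.
Qed.

Set Implicit Arguments.
Section H.
Variables (R : realType) (n : nat) (xs : R * R) (locs : 'I_n -> R * R)
  (wt : 'I_n -> R) (sigma : {perm 'I_n}).

Lemma pts_point j : exists a, nth xs (tour_pts xs locs sigma) j = Defs.point xs locs a.
Proof.
rewrite /tour_pts; case: j => [|k] /=; first by exists None.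
have [lt|ge] := ltnP k (size [seq locs (sigma k0) | k0 <- enum 'I_n]).
  have /mapP [k' _ ->] := mem_nth xs lt.
  by exists (Some (sigma k')).
by rewrite nth_default //; exists None.
Qed.

Lemma edist_ge0 (a b : R * R) : 0 <= Defs.edist a b.
Proof. exact: sqrtr_ge0. Qed.

Lemma edist_le a b : Defs.edist (Defs.point xs locs a) (Defs.point xs locs b) <= Qprime xs locs.
Proof.
rewrite /Qprime.
apply: le_trans (le_bigmax _ _ a).
exact: (le_bigmax _ (fun b => Defs.edist (Defs.point xs locs a) (Defs.point xs locs b)) b).
Qed.

Lemma leg_ge0 j : 0 <= leg xs locs sigma j.
Proof. exact: edist_ge0. Qed.

Lemma leg_le j : leg xs locs sigma j <= Qprime xs locs.
Proof.
rewrite /leg; have [a ->] := pts_point j.-1; have [b ->] := pts_point j.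
exact: edist_le.
Qed.

Lemma Qprime_ge0 : 0 <= Qprime xs locs.
Proof. exact: le_trans (leg_ge0 0) (leg_le 0). Qed.

Definition S m := \sum_(1 <= k < m.+1) leg xs locs sigma k.

Lemma S_ge0 m : 0 <= S m.
Proof. by apply: sumr_ge0 => k _; exact: leg_ge0. Qed.

Lemma arrival_ge (hw : forall i, 0 <= wt i) i : S i <= arrival xs locs wt sigma i.
Proof.
rewrite /arrival /S lerDr.
have [lt|ge] := ltnP i.-1 (size [seq wt (sigma k0) | k0 <- enum 'I_n]).
  by have /mapP [k' _ ->] := mem_nth 0 lt.
by rewrite nth_default.
Qed.

Lemma main_ind (p : R) : 1 <= p -> forall m,
  S m `^ (p + 1) <= (p + 1) * Qprime xs locs * \sum_(1 <= i < m.+1) S i `^ p.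
Proof.
move=> p1; elim=> [|m IH].
  rewrite /S !big_geq // powR0; last by rewrite gt_eqF // addr_gt0 // (lt_le_trans _ p1).
  by rewrite mulr0.
have Sm : S m.+1 = S m + leg xs locs sigma m.+1 by rewrite /S big_nat_recr.
have := @young_step R p (S m) (S m.+1) p1 (S_ge0 m) (S_ge0 m.+1).
rewrite {3}Sm addrAC subrr add0r => Y.
rewrite big_nat_recr //= mulrDr.
have q0 : 0 <= p + 1 by rewrite addr_ge0 // (le_trans _ p1).
have h2 : (p + 1) * S m.+1 `^ p * leg xs locs sigma m.+1 <=
          (p + 1) * Qprime xs locs * S m.+1 `^ p.
  rewrite mulrAC; apply: ler_wpM2r; first exact: powR_ge0.
  apply: ler_wpM2l => //; exact: leg_le.
lra.
Qed.

End H.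

Theorem lemma1 (R : realType) (E : set (R * R)) (n : nat) (xs : R * R)
    (locs : 'I_n -> R * R) (wt : 'I_n -> R) (sigma : {perm 'I_n}) (sbar p : R) :
  connected E -> E xs -> (forall i, E (locs i)) ->
  (forall i, 0 <= wt i) -> 0 < sbar -> 1 <= p ->
  tour_len xs locs sigma <=
  powR ((Qprime xs locs + sbar) * (p + 1) * powR (tour_cost xs locs wt sigma p) p)
       (p + 1)^-1.
Proof.
move=> _ _ _ hw sb0 p1.
have p0 : 0 < p by apply: lt_le_trans p1.
have q0 : 0 < p + 1 by apply: addr_gt0.
have -> : tour_len xs locs sigma = @S R n xs locs sigma n by [].
rewrite /tour_cost -powRrM mulVf ?gt_eqF // powRr1; last first.
  by apply: sumr_ge0 => i _; exact: powR_ge0.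
have L0 := @S_ge0 R n xs locs sigma n.
have -> : @S R n xs locs sigma n =
   powR (powR (@S R n xs locs sigma n) (p + 1)) (p + 1)^-1.
  by rewrite -powRrM mulfV ?gt_eqF // powRr1.
apply: ge0_ler_powR; first by rewrite invr_ge0 ltW.
- by rewrite nnegrE powR_ge0.
- rewrite nnegrE; apply: mulr_ge0; last by apply: sumr_ge0 => i _; exact: powR_ge0.
  apply: mulr_ge0; last exact: ltW.
  by apply: addr_ge0; [exact: (@Qprime_ge0 R n xs locs sigma) | exact: ltW].
apply: le_trans (@main_ind R n xs locs sigma p p1 n) _.
rewrite [X in _ <= X * _](mulrC _ (p + 1)) -!mulrA.
apply: ler_wpM2l; first exact: ltW.
apply: ler_pM.
- exact: (@Qprime_ge0 R n xs locs sigma).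
- by apply: sumr_ge0 => i _; exact: powR_ge0.
- by rewrite lerDl ltW.
- apply: ler_sum => i _; apply: ge0_ler_powR; rewrite ?nnegrE.
  + exact: ltW.
  + exact: (@S_ge0 R n xs locs sigma i).
  + exact: le_trans (@S_ge0 R n xs locs sigma i) (@arrival_ge R n xs locs wt sigma hw i).
  + exact: (@arrival_ge R n xs locs wt sigma hw).
Qed.
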